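(* Let $1<K<n$, $\|\cdot\|_s$ a sign- and permutation-invariant norm on $\mathbb{R}^n$, and $x\in\mathbb{R}^n$. Then $u(x)$ is an optimal solution of $$\min\ \|u\|_s\quad\text{s.t. } u_1\ge\dots\ge u_K\ge0,\ u_{K+1}=\dots=u_n=0,\ u\ge_{wm}|x|.$$
   Context: A norm is sign- and permutation-invariant if it is unchanged under permuting entries and under changing signs of entries. $|x|$ is the componentwise absolute value; $v_{[i]}$ is the $i$-th largest entry of $v$; $a\ge_{wm}b$ means $\sum_{i=1}^j a_{[i]}\ge\sum_{i=1}^j b_{[i]}$ for all $j=1,\dots,n$. $s(x)_i=\frac{\sum_{j=i}^n|x|_{[j]}}{K-i+1}$ ($i=1,\dots,K$); $i_x$ is the smallest index in $\{1,\dots,K\}$ minimizing $s(x)_i$; $\delta(x)=s(x)_{i_x}$; $u(x)_i=|x|_{[i]}$ for $i<i_x$, $u(x)_i=\delta(x)$ for $i_x\le i\le K$, $u(x)_i=0$ for $i>K$. *)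

(* Defs.v *)
From HB Require Import structures.
From mathcomp Require Import all_boot all_order all_algebra all_fingroup.
Set Implicit Arguments. Unset Strict Implicit. Unset Printing Implicit Defensive.
Import Order.TTheory GRing.Theory Num.Theory.
Local Open Scope ring_scope.

Section Defs.
Variables (R : realFieldType) (n : nat).

Definition is_norm (N : 'rV[R]_n -> R) : Prop :=
  [/\ forall v, N v = 0 -> v = 0,
      forall (a : R) v, N (a *: v) = `|a| * N v
    & forall u v, N (u + v) <= N u + N v].

Definition sign_invariant (N : 'rV[R]_n -> R) : Prop :=
  forall (s : 'I_n -> R) (v : 'rV[R]_n),
    (forall i, s i = 1 \/ s i = -1) ->
    N (\row_i (s i * v ord0 i)) = N v.

Definition perm_invariant (N : 'rV[R]_n -> R) : Prop :=
  forall (p : 'S_n) (v : 'rV[R]_n), N (\row_i v ord0 (p i)) = N v.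

Definition vabs (x : 'rV[R]_n) : 'rV[R]_n := \row_i `|x ord0 i|.

Definition dsort (v : 'rV[R]_n) : seq R :=
  sort (fun a b => b <= a) [seq v ord0 i | i <- enum 'I_n].

(* vbig v i = v_[i+1], the (i+1)-th largest entry (0-based index i) *)
Definition vbig (v : 'rV[R]_n) (i : nat) : R := nth 0 (dsort v) i.

Definition wmaj (a b : 'rV[R]_n) : Prop :=
  forall j : nat, (1 <= j <= n)%N ->
    \sum_(i < j) vbig b i <= \sum_(i < j) vbig a i.

Variable K : nat.

(* s(x)_{i+1} = (sum_{j=i+1}^n |x|_[j]) / (K - i), for 0-based i < K *)
Definition sx (x : 'rV[R]_n) (i : nat) : R :=
  (\sum_(i <= j < n) vbig (vabs x) j) / (K - i)%:R.

(* i_x - 1 (0-based): smallest index in 0..K-1 minimizing s(x) *)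
Definition ix (x : 'rV[R]_n) : nat :=
  find (fun i => all (fun j => sx x i <= sx x j) (iota 0 K)) (iota 0 K).

Definition delta (x : 'rV[R]_n) : R := sx x (ix x).

Definition ux (x : 'rV[R]_n) : 'rV[R]_n :=
  \row_i (if (i < ix x)%N then vbig (vabs x) i
          else if (i < K)%N then delta x else 0).

Definition feasible (x u : 'rV[R]_n) : Prop :=
  [/\ forall i j : 'I_n, (i <= j)%N -> (j < K)%N -> u ord0 j <= u ord0 i,
      forall i : 'I_n, (i < K)%N -> 0 <= u ord0 i,
      forall i : 'I_n, (K <= i)%N -> u ord0 i = 0
    & wmaj u (vabs x)].

End Defs.

(* Main.v *)
Require Import Defs.
From HB Require Import structures.
From mathcomp Require Import all_boot all_order all_algebra all_fingroup.
From mathcomp Require Import ring lra zify.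
Set Implicit Arguments. Unset Strict Implicit. Unset Printing Implicit Defensive.
Import Order.TTheory GRing.Theory Num.Theory.
Local Open Scope ring_scope.

Section Fan.
Variables (R : realFieldType) (n : nat) (N : 'rV[R]_n -> R).
Hypotheses (hN : is_norm N) (hS : sign_invariant N) (hP : perm_invariant N).

Definition rv (f : nat -> R) : 'rV[R]_n := \row_(i < n) f i.
Definition upd (f : nat -> R) (j : nat) (t : R) := fun i => if i == j then t else f i.

Lemma conv_le (v w : 'rV[R]_n) (l : R) : 0 <= l <= 1 -> N w <= N v ->
  N (l *: v + (1 - l) *: w) <= N v.
Proof.
case: hN => _ hh ht /andP[l0 l1] hw.
apply: le_trans (ht _ _) _; rewrite !hh (ger0_norm l0) ger0_norm ?subr_ge0 //.
have : (1 - l) * N w <= (1 - l) * N v by rewrite ler_wpM2l ?subr_ge0.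
lra.
Qed.

Lemma shrink_le f j t : (j < n)%N -> 0 <= t <= f j ->
  N (rv (upd f j t)) <= N (rv f).
Proof.
move=> jn /andP[t0 tf].
have [fj0|fjn0] := eqVneq (f j) 0.
  have -> : rv (upd f j t) = rv f.
    apply/rowP=> i; rewrite !mxE /upd; case: eqP => // ->; lra.
  by [].
pose s := fun i : 'I_n => if (i == j :> nat) then -1 else (1 : R).
have hs : forall i, s i = 1 \/ s i = -1 by move=> i; rewrite /s; case: eqP; auto.
pose l := (1 + t / f j) / 2.
have fjp : 0 < f j by rewrite lt_def fjn0; lra.
have -> : rv (upd f j t) = l *: rv f + (1 - l) *: \row_i (s i * rv f ord0 i).
  apply/rowP=> i; rewrite !mxE /upd /s; case: eqP => [->|_].
    rewrite /l; field; exact: fjn0.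
  rewrite /l; field; exact: fjn0.
apply: conv_le; last by rewrite hS.
have q0 : 0 <= t / f j := divr_ge0 t0 (ltW fjp).
have q1 : t / f j <= 1 by rewrite ler_pdivrMr // mul1r.
rewrite /l; apply/andP; split; lra.
Qed.

Lemma transfer_le f j k d : (j < k)%N -> (k < n)%N -> 0 <= d <= f j - f k ->
  N (rv (upd (upd f j (f j - d)) k (f k + d))) <= N (rv f).
Proof.
move=> jk kn /andP[d0 dle].
have jn : (j < n)%N by apply: ltn_trans kn.
have [e|ne] := eqVneq (f j) (f k).
  have -> : rv (upd (upd f j (f j - d)) k (f k + d)) = rv f.
    apply/rowP=> i; rewrite !mxE /upd.
    case: eqP => [->|_]; first lra.
    case: eqP => [->|_]; lra.
  by [].
have dp : 0 < f j - f k by rewrite lt_def subr_eq0 ne; lra.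
pose p := tperm (Ordinal jn) (Ordinal kn).
pose l := 1 - d / (f j - f k).
have -> : rv (upd (upd f j (f j - d)) k (f k + d)) =
   l *: rv f + (1 - l) *: \row_i (rv f ord0 (p i)).
  apply/rowP=> i; rewrite !mxE /upd /p /l.
  case: tpermP => [->|->|hi1 hi2] /=.
  - rewrite (ltn_eqF jk) eqxx; field; by rewrite subr_eq0.
  - rewrite eqxx; field; by rewrite subr_eq0.
  - have h1 : (i == k :> nat) = false by apply/eqP => h; apply: hi2; apply: val_inj.
    have h2 : (i == j :> nat) = false by apply/eqP => h; apply: hi1; apply: val_inj.
    rewrite h1 h2; ring.
apply: conv_le; last by rewrite hP.
have q0 : 0 <= d / (f j - f k) := divr_ge0 d0 (ltW dp).
have q1 : d / (f j - f k) <= 1 by rewrite ler_pdivrMr // mul1r.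
rewrite /l; apply/andP; split; lra.
Qed.

Lemma sum_upd (f : nat -> R) j t m :
  \sum_(0 <= i < m) upd f j t i = \sum_(0 <= i < m) f i + (if (j < m)%N then t - f j else 0).
Proof.
elim: m => [|m IH]; first by rewrite !big_geq // ltn0 addr0.
rewrite !big_nat_recr //= IH /upd.
case: eqP => [->|mj].
  rewrite ltnn ltnSn; ring.
have -> : (j < m.+1)%N = (j < m)%N by apply/idP/idP; lia.
case: ifP => _; ring.
Qed.

Lemma mono_all (f : nat -> R) :
  (forall i, (i.+1 < n)%N -> f i.+1 <= f i) ->
  forall i j, (i <= j)%N -> (j < n)%N -> f j <= f i.
Proof.
move=> h i; elim=> [|j IH] ij jn.
  by rewrite leqn0 in ij; rewrite (eqP ij).
case: (ltngtP i j.+1) ij => // [lt|eq] _.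
  by apply: le_trans (h _ jn) (IH _ (ltnW jn)).
by rewrite eq.
Qed.

Lemma count_le_in (s : seq nat) (a1 a2 : pred nat) :
  (forall i, i \in s -> a1 i -> a2 i) -> (count a1 s <= count a2 s)%N.
Proof.
elim: s => // y s IH h /=; apply: leq_add.
  by case e: (a1 y) => //; rewrite (h y) // inE eqxx.
by apply: IH => i iin; apply: h; rewrite inE iin orbT.
Qed.

Lemma count_lt (s : seq nat) (a1 a2 : pred nat) x : x \in s ->
  (forall i, i \in s -> a1 i -> a2 i) -> a2 x -> ~~ a1 x ->
  (count a1 s < count a2 s)%N.
Proof.
elim: s => // y s IH; rewrite inE => /orP[/eqP->|xs] h ax nax /=.
  rewrite ax (negbTE nax) add0n add1n ltnS; apply: count_le_in => i iin.
  by apply: h; rewrite inE iin orbT.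
rewrite -addnS; apply: leq_add.
  by case e: (a1 y) => //; rewrite (h y) // inE eqxx.
by apply: IH => // i iin; apply: h; rewrite inE iin orbT.
Qed.

Lemma key_sum (fa fb : nat -> R) j k m :
  (forall i, (j < i)%N -> (i < k)%N -> fa i = fb i) -> (j < m)%N -> (m <= k)%N ->
  \sum_(0 <= i < m) fb i - \sum_(0 <= i < m) fa i =
  \sum_(0 <= i < j) fb i - \sum_(0 <= i < j) fa i + (fb j - fa j).
Proof.
move=> h jm mk.
rewrite !(@big_cat_nat _ _ _ j.+1 0 m _ _ (leq0n _) jm) /= !big_nat_recr //=.
have -> : \sum_(j.+1 <= i < m) fa i = \sum_(j.+1 <= i < m) fb i.
  apply: eq_big_nat => i /andP[h1 h2]; apply: h => //; lia.
ring.
Qed.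

Lemma fan (fa fb : nat -> R) :
  (forall i, (i.+1 < n)%N -> fa i.+1 <= fa i) ->
  (forall i, (i < n)%N -> 0 <= fa i) ->
  (forall i, (i.+1 < n)%N -> fb i.+1 <= fb i) ->
  (forall i, (i < n)%N -> 0 <= fb i) ->
  (forall m, (m <= n)%N -> \sum_(0 <= i < m) fa i <= \sum_(0 <= i < m) fb i) ->
  N (rv fa) <= N (rv fb).
Proof.
move=> sa pa.
move: {2}(count (fun i => fa i != fb i) (iota 0 n))
  (leqnn (count (fun i => fa i != fb i) (iota 0 n))) => d.
elim: d fb => [|d IH] fb hd sb pb hpre;
  (case: (boolP (has (fun i => fa i != fb i) (iota 0 n))) => hh; last first).
- have -> : rv fa = rv fb; last by [].
  apply/rowP => i; rewrite !mxE; apply/eqP.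
  by move/hasPn: hh => /(_ i); rewrite mem_iota /= ltn_ord => /(_ isT) /negPn.
- by move: hd; rewrite leqn0 => /eqP e; move: hh; rewrite has_count e.
- have -> : rv fa = rv fb; last by [].
  apply/rowP => i; rewrite !mxE; apply/eqP.
  by move/hasPn: hh => /(_ i); rewrite mem_iota /= ltn_ord => /(_ isT) /negPn.
have E : exists i, (i < n)%N && (fa i < fb i).
  case: (boolP (has (fun i => fa i < fb i) (iota 0 n))) => [/hasP[i iin lt]|hn].
    by exists i; rewrite lt andbT; rewrite mem_iota in iin.
  exfalso.
  have le : forall i, (i < n)%N -> fb i <= fa i.
    move=> i iin; rewrite leNgt; move/hasPn: hn; apply.
    by rewrite mem_iota.
  case/hasP: hh => i0; rewrite mem_iota /= => i0n ne.
  have P0 : exists i, (i < n)%N && (fb i < fa i).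
    by exists i0; rewrite i0n /= lt_neqAle eq_sym ne le.
  case: (ex_minnP P0) => i1 /andP[i1n lt1] i1min.
  have eqs : \sum_(0 <= i < i1) fa i = \sum_(0 <= i < i1) fb i.
    apply: eq_big_nat => i /andP[_ ii1].
    have iin : (i < n)%N by apply: ltn_trans i1n.
    apply/le_anti/andP; split; last exact: le.
    rewrite leNgt; apply/negP => h.
    by have := i1min i; rewrite iin h => /(_ isT); rewrite leqNgt ii1.
  have := hpre i1.+1 i1n; rewrite !big_nat_recr //= eqs => hh2.
  have : fb i1 < fa i1 by [].
  lra.
have ubP : forall j, (j < n)%N && (fa j < fb j) -> (j <= n)%N.
  by move=> j /andP[/ltnW].
case: (ex_maxnP E ubP) => j /andP[jn ltj] jmax.
have after : forall i, (j < i)%N -> (i < n)%N -> fb i <= fa i.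
  move=> i ji iin; rewrite leNgt; apply/negP => h.
  by have := jmax i; rewrite iin h => /(_ isT); rewrite leqNgt ji.
have hprej := hpre j (ltnW jn).
have smono := mono_all sb; have amono := mono_all sa.
case: (boolP (has (fun k => (j < k)%N && (fb k < fa k)) (iota 0 n))) => hk.
- have P2 : exists k, [&& (j < k)%N, (k < n)%N & fb k < fa k].
    case/hasP: hk => k; rewrite mem_iota /= => kn /andP[jk lt].
    by exists k; rewrite jk kn lt.
  case: (ex_minnP P2) => k /and3P[jk kn ltk] kmin.
  have between : forall i, (j < i)%N -> (i < k)%N -> fa i = fb i.
    move=> i ji ik.
    have iin : (i < n)%N by apply: ltn_trans kn.
    apply/le_anti/andP; split; last exact: after.
    rewrite leNgt; apply/negP => h.
    by have := kmin i; rewrite ji iin h => /(_ isT); rewrite leqNgt ik.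
  pose dd := if fb j - fa j <= fa k - fb k then fb j - fa j else fa k - fb k.
  have dd1 : dd <= fb j - fa j by rewrite /dd; case: ifP => // /negbT; rewrite -ltNge => /ltW.
  have dd2 : dd <= fa k - fb k by rewrite /dd; case: ifP.
  have dd0 : 0 < dd by rewrite /dd; case: ifP => _; rewrite subr_gt0.
  have fakj : fa k <= fa j by apply: amono => //; apply: ltnW.
  have kj : (k == j) = false by apply: gtn_eqF.
  pose fb' := upd (upd fb j (fb j - dd)) k (fb k + dd).
  have nek : fa k != fb k by apply/eqP => e; move: ltk; rewrite e ltxx.
  have nej : fa j != fb j by apply/eqP => e; move: ltj; rewrite e ltxx.
  have hdd : 0 <= dd <= fb j - fb k by apply/andP; split; [exact: ltW | lra].
  apply: le_trans _ (transfer_le (f:=fb) (d:=dd) jk kn hdd).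
  apply: IH.
  + rewrite -ltnS; apply: leq_trans hd.
    case hif: (fb j - fa j <= fa k - fb k).
    * apply: (@count_lt _ _ _ j); first by rewrite mem_iota.
      - move=> i _; rewrite /upd /=; case: ifP => [/eqP->|_]; first by move=> _; exact: nek.
        by case: ifP => [/eqP->|_] // _; exact: nej.
      - exact: nej.
      - rewrite /upd /=; case: ifP => [/eqP e|_]; first by move: jk; rewrite e ltnn.
        rewrite eqxx /dd hif; apply/negPn/eqP; ring.
    * apply: (@count_lt _ _ _ k); first by rewrite mem_iota.
      - move=> i _; rewrite /upd /=; case: ifP => [/eqP->|_]; first by move=> _; exact: nek.
        by case: ifP => [/eqP->|_] // _; exact: nej.
      - exact: nek.
      - rewrite /upd eqxx /dd hif; apply/negPn/eqP; ring.
  + move=> i hi; rewrite /fb' /upd /=.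
    have Si := sa i hi; have SBi := sb i hi.
    have Bi := between i; have Bi1 := between i.+1.
    move: Si SBi Bi Bi1 dd0 dd1 dd2; clearbody fb' dd.
    clear -jk kn hi jn.
    do ![case: ifP => /eqP ?]; subst; try (exfalso; lia);
      move=> Si SBi Bi Bi1 dd0 dd1 dd2;
      first [lra | rewrite -Bi; [lra|lia|lia] | rewrite -Bi1; [lra|lia|lia]].
  + move=> i hi; rewrite /fb' /upd /=.
    move: (pb i hi) (pb k kn) (pa j jn) dd0 dd1; clearbody fb' dd.
    clear -jk kn hi jn.
    by do ![case: ifP => /eqP ?]; subst; move=> *; lra.
  + move=> m hm; rewrite /fb' !sum_upd.
    have -> : upd fb j (fb j - dd) k = fb k.
      by rewrite /upd /=; case: ifP => [/eqP e|//]; move: jk; rewrite e ltnn.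
    have hpm := hpre m hm.
    case: (ltnP j m) => jm.
      case: (ltnP k m) => km /=.
        lra.
      have := key_sum between jm km; lra.
    case: (ltnP k m) => km /=.
      by have := ltn_trans (leq_ltn_trans jm jk) km; rewrite ltnn.
    lra.
- have between : forall i, (j < i)%N -> (i < n)%N -> fa i = fb i.
    move=> i ji iin; apply/le_anti/andP; split; last exact: after.
    rewrite leNgt; apply/negP => h.
    by move/hasPn: hk => /(_ i); rewrite mem_iota /= iin ji h => /(_ isT).
  have nej : fa j != fb j by apply/eqP => e; move: ltj; rewrite e ltxx.
  have hdd : 0 <= fa j <= fb j by apply/andP; split; [exact: pa | exact: ltW].
  apply: le_trans _ (shrink_le (f:=fb) jn hdd).
  apply: IH.
  + rewrite -ltnS; apply: leq_trans hd.
    apply: (@count_lt _ _ _ j); first by rewrite mem_iota.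
    * move=> i _; rewrite /upd /=; case: ifP => [/eqP->|_] // _; exact: nej.
    * exact: nej.
    * by rewrite /upd eqxx eqxx.
  + move=> i hi; rewrite /upd /=.
    move: (sa i hi) (sb i hi) (between i.+1) hdd.
    clear -hi jn.
    do ![case: ifP => /eqP ?]; subst; try (exfalso; lia);
      move=> Si SBi Bi1 /andP[h1 h2];
      first [lra | rewrite -Bi1; [lra|lia|lia]].
  + move=> i hi; rewrite /upd /=; case: ifP => _; [exact: pa | exact: pb].
  + move=> m hm; rewrite sum_upd.
    have hpm := hpre m hm.
    case: (ltnP j m) => jm /=.
      have := key_sum between jm hm; lra.
    lra.
Qed.

End Fan.

Section Main.
Variables (R : realFieldType) (n K : nat) (x : 'rV[R]_n).
Hypotheses (K1 : (1 < K)%N) (Kn : (K < n)%N).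

Notation c := (vbig (vabs x)).
Notation C m := (\sum_(0 <= i < m) c i).

Lemma size_dsort (v : 'rV[R]_n) : size (dsort v) = n.
Proof. by rewrite /dsort size_sort size_map size_enum_ord. Qed.

Lemma c_ge0 i : 0 <= c i.
Proof.
rewrite /vbig; case: (ltnP i (size (dsort (vabs x)))) => h; last by rewrite nth_default.
have : nth 0 (dsort (vabs x)) i \in dsort (vabs x) by apply: mem_nth.
by rewrite /dsort mem_sort => /mapP[j _ ->]; rewrite mxE normr_ge0.
Qed.

Lemma c_mono i j : (i <= j)%N -> c j <= c i.
Proof.
move=> ij; case: (ltnP j n) => jn; last by rewrite /vbig nth_default ?size_dsort // c_ge0.
have tr : transitive (fun a b : R => b <= a) by move=> b a d h1 h2; apply: le_trans h2 h1.
have so : sorted (fun a b : R => b <= a) (dsort (vabs x)).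
  by apply: sort_sorted => a b; rewrite orbC le_total.
have := sorted_leq_nth tr (fun a => lexx a) 0 so; apply;
  rewrite ?inE ?size_dsort //; apply: leq_ltn_trans ij jn.
Qed.

Lemma C_mono m m' : (m <= m')%N -> C m <= C m'.
Proof.
move=> h; rewrite (@big_cat_nat _ _ _ m 0 m' _ _ (leq0n m) h) /= lerDl.
by apply: sumr_ge0 => i _; apply: c_ge0.
Qed.

Lemma vbig_sorted (f : nat -> R) : (forall i, (i.+1 < n)%N -> f i.+1 <= f i) ->
  forall i, (i < n)%N -> vbig (@rv R n f) i = f i.
Proof.
move=> sf i iin.
have e : [seq (@rv R n f) ord0 j | j <- enum 'I_n] = map f (iota 0 n).
  by rewrite -val_enum_ord -map_comp; apply: eq_map => j; rewrite /= mxE.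
rewrite /vbig /dsort e sorted_sort.
- by rewrite (nth_map 0) ?size_iota // nth_iota.
- by move=> b a d h1 h2; apply: le_trans h2 h1.
rewrite sorted_map.
apply: (@sub_in_sorted _ (fun j => (j < n)%N) leq).
- move=> a b an bn ab /=; exact: mono_all sf _ _ ab bn.
- by apply/allP => j; rewrite mem_iota.
exact: iota_sorted.
Qed.

Lemma sum_ord_nat (F : nat -> R) m : \sum_(i < m) F i = \sum_(0 <= i < m) F i.
Proof. by rewrite big_mkord. Qed.

Lemma wmaj_iff (f : nat -> R) : (forall i, (i.+1 < n)%N -> f i.+1 <= f i) ->
  wmaj (@rv R n f) (vabs x) <->
  (forall m, (1 <= m <= n)%N -> C m <= \sum_(0 <= i < m) f i).
Proof.
move=> sf; have key : forall m, (m <= n)%N ->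
  \sum_(i < m) vbig (@rv R n f) i = \sum_(0 <= i < m) f i.
  move=> m mn; rewrite sum_ord_nat; apply: eq_big_nat => i /andP[_ im].
  by apply: vbig_sorted => //; apply: leq_trans im mn.
split=> h m /andP[m1 mn].
  by rewrite -key // -sum_ord_nat; apply: h; rewrite m1.
by rewrite key // sum_ord_nat; apply: h; rewrite m1.
Qed.

Lemma ex_argmin (g : nat -> R) m : (0 < m)%N ->
  exists i, (i < m)%N /\ forall j, (j < m)%N -> g i <= g j.
Proof.
elim: m => // m IH _; case: (posnP m) => [->|mp].
  by exists 0%N; split => // j; rewrite ltnS leqn0 => /eqP->.
case: (IH mp) => i [im hi].
case: (leP (g i) (g m)) => h.
  exists i; split; first by apply: ltnW.
  by move=> j; rewrite ltnS leq_eqVlt => /orP[/eqP->|/hi].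
exists m; split => // j; rewrite ltnS leq_eqVlt => /orP[/eqP->//|/hi].
by apply: le_trans; apply: ltW.
Qed.

Notation ixx := (ix K x).
Notation dl := (delta K x).

Lemma has_min : has (fun i => all (fun j => sx K x i <= sx K x j) (iota 0 K)) (iota 0 K).
Proof.
have [i [iK hi]] := @ex_argmin (sx K x) K (ltnW K1).
apply/hasP; exists i; first by rewrite mem_iota.
by apply/allP => j; rewrite mem_iota => /andP[_ jK]; apply: hi.
Qed.

Lemma ixK : (ixx < K)%N.
Proof. by have := has_min; rewrite has_find size_iota. Qed.

Lemma ix_min j : (j < K)%N -> dl <= sx K x j.
Proof.
move=> jK; have := nth_find 0%N has_min; rewrite -/(ix K x) nth_iota ?ixK //.
by move/allP => /(_ j); rewrite mem_iota /=; apply.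
Qed.

Lemma ix_strict i : (i < ixx)%N -> dl < sx K x i.
Proof.
move=> h; have := before_find 0%N h; rewrite nth_iota; last first.
  by apply: ltn_trans h ixK.
move/negbT/allPn => [j]; rewrite mem_iota /= => jK; rewrite -ltNge => lt.
by apply: le_lt_trans lt; apply: ix_min.
Qed.

Lemma sx_eq i : (i < K)%N -> (K - i)%:R * sx K x i = C n - C i.
Proof.
move=> iK; rewrite /sx mulrC divfK; last by rewrite pnatr_eq0 subn_eq0 -ltnNge.
have iin : (i <= n)%N by apply: ltnW; apply: ltn_trans iK Kn.
rewrite (@big_cat_nat _ _ _ i 0 n _ _ (leq0n i) iin) /=; ring.
Qed.

Lemma dl_eq : (K - ixx)%:R * dl = C n - C ixx.
Proof. exact: sx_eq ixK. Qed.

Lemma dl_ge0 : 0 <= dl.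
Proof.
rewrite /delta /sx; apply: divr_ge0; last exact: ler0n.
by apply: sumr_ge0 => i _; apply: c_ge0.
Qed.

Lemma dl_lt i : (i < ixx)%N -> dl < c i.
Proof.
move=> h; pose p := ixx.-1.
have pix : p.+1 = ixx by rewrite /p prednK //; apply: leq_ltn_trans h.
have pK : (p < K)%N by apply: ltn_trans ixK; rewrite -pix.
have lp : dl < sx K x p by apply: ix_strict; rewrite -pix.
have e := sx_eq pK.
have e2 : C ixx = C p + c p by rewrite -pix big_nat_recr.
have e3 : (K - p)%:R = (K - ixx)%:R + 1 :> R.
  by rewrite natr1; congr (_%:R); have := ixK; rewrite -pix; lia.
have e4 := dl_eq.
have h5 : (K - ixx)%:R * dl <= (K - ixx)%:R * sx K x p by rewrite ler_wpM2l // ltW.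
have : c p <= c i by apply: c_mono; rewrite -ltnS pix.
move: e; rewrite e3; lra.
Qed.

Definition fux (i : nat) : R :=
  if (i < ixx)%N then c i else if (i < K)%N then dl else 0.

Lemma ux_rv : ux K x = @rv R n fux.
Proof. by apply/rowP => i; rewrite !mxE. Qed.

Lemma fux_ge0 i : 0 <= fux i.
Proof. rewrite /fux; case: ifP => _; first exact: c_ge0. case: ifP => _ //; exact: dl_ge0. Qed.

Lemma fux_mono i j : (i <= j)%N -> fux j <= fux i.
Proof.
move=> ij; rewrite /fux.
case: (ltnP j ixx) => jx.
  by rewrite (leq_ltn_trans ij jx); apply: c_mono.
case: (ltnP j K) => jK; last by apply: fux_ge0.
case: (ltnP i ixx) => ix'.
  apply: ltW; exact: dl_lt.
by rewrite (leq_ltn_trans ij jK).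
Qed.

Lemma Va m : (m <= ixx)%N -> \sum_(0 <= i < m) fux i = C m.
Proof.
move=> h; apply: eq_big_nat => i /andP[_ im].
by rewrite /fux (leq_trans im h).
Qed.

Lemma Vb m : (ixx <= m)%N -> (m <= K)%N ->
  \sum_(0 <= i < m) fux i = C ixx + (m - ixx)%:R * dl.
Proof.
move=> h1 h2; rewrite (@big_cat_nat _ _ _ ixx 0 m _ _ (leq0n _) h1) /= Va //.
congr (_ + _); rewrite mulr_natl -sumr_const_nat.
apply: eq_big_nat => i /andP[h3 h4].
by rewrite /fux ltnNge h3 /= (leq_trans h4 h2).
Qed.

Lemma Vc m : (K <= m)%N -> \sum_(0 <= i < m) fux i = C n.
Proof.
move=> h; rewrite (@big_cat_nat _ _ _ K 0 m _ _ (leq0n _) h) /= Vb ?(ltnW ixK) //.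
have -> : \sum_(K <= i < m) fux i = 0.
  rewrite (eq_big_nat _ _ (F2 := fun=> 0)) ?big1 // => i /andP[h3 _].
  by rewrite /fux ltnNge (leq_trans (ltnW ixK) h3) /= ltnNge h3.
have := dl_eq; lra.
Qed.

Lemma fux_sorted i : (i.+1 < n)%N -> fux i.+1 <= fux i.
Proof. by move=> _; apply: fux_mono. Qed.

Lemma ux_feasible : feasible K x (ux K x).
Proof.
split.
- by move=> i j ij jK; rewrite !mxE; apply: fux_mono.
- by move=> i _; rewrite mxE; apply: fux_ge0.
- by move=> i iK; rewrite mxE /fux ltnNge (leq_trans (ltnW ixK) iK) /= ltnNge iK.
rewrite ux_rv; apply/(wmaj_iff fux_sorted) => m /andP[m1 mn].
case: (leqP m ixx) => h1; first by rewrite Va.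
case: (leqP m K) => h2.
  rewrite Vb ?(ltnW h1) //.
  case: (ltnP m K) => h3.
    have e := sx_eq h3; have e2 := dl_eq; have lm := ix_min h3.
    have e3 : (K - ixx)%:R = (K - m)%:R + (m - ixx)%:R :> R.
      by rewrite -natrD; congr (_%:R); lia.
    have h5 : (K - m)%:R * dl <= (K - m)%:R * sx K x m by rewrite ler_wpM2l.
    move: e2; rewrite e3; lra.
  have -> : m = K by apply/eqP; rewrite eqn_leq h2 h3.
  have e2 := dl_eq; have := C_mono (ltnW Kn); lra.
rewrite Vc ?(ltnW h2) //; exact: C_mono.
Qed.

Lemma opt_prefix (fu : nat -> R) :
  (forall i, (i.+1 < n)%N -> fu i.+1 <= fu i) ->
  (forall i, (K <= i)%N -> (i < n)%N -> fu i = 0) ->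
  (forall m, (1 <= m <= n)%N -> C m <= \sum_(0 <= i < m) fu i) ->
  forall m, (m <= n)%N -> \sum_(0 <= i < m) fux i <= \sum_(0 <= i < m) fu i.
Proof.
move=> sf zf wm m mn.
have mono := mono_all sf.
have wm' : forall m, (m <= n)%N -> C m <= \sum_(0 <= i < m) fu i.
  move=> m' h; case: (posnP m') => [->|mp]; first by rewrite !big_geq.
  by apply: wm; rewrite h andbT.
have Un : forall m', (K <= m')%N -> (m' <= n)%N ->
    \sum_(0 <= i < m') fu i = \sum_(0 <= i < n) fu i.
  move=> m' h1 h2; rewrite (@big_cat_nat _ _ _ m' 0 n _ _ (leq0n _) h2) /=.
  have -> : \sum_(m' <= i < n) fu i = 0.
    rewrite (eq_big_nat _ _ (F2 := fun=> 0)) ?big1 // => i /andP[h3 h4].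
    by apply: zf => //; apply: leq_trans h3.
  by rewrite addr0.
case: (leqP m ixx) => h1; first by rewrite Va //; apply: wm'.
case: (leqP K m) => h2.
  by rewrite Vc // Un //; apply: wm'.
rewrite Vb ?(ltnW h1) ?(ltnW h2) //.
have mn' : (m < n)%N by apply: ltn_trans h2 Kn.
set p : R := (m - ixx)%:R; set q : R := (K - m)%:R.
set S1 := \sum_(ixx <= i < m) fu i; set S2 := \sum_(m <= i < K) fu i.
set Ui := \sum_(0 <= i < ixx) fu i.
have eU : \sum_(0 <= i < m) fu i = Ui + S1 by rewrite (@big_cat_nat _ _ _ ixx 0 m _ _ (leq0n _) (ltnW h1)).
have eK : \sum_(0 <= i < K) fu i = Ui + S1 + S2.
  by rewrite (@big_cat_nat _ _ _ m 0 K _ _ (leq0n _) (ltnW h2)) /= eU.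
have hK := wm' n (leqnn n). rewrite -(Un K (leqnn K) (ltnW Kn)) in hK. rewrite eK in hK.
have hi := wm' ixx (ltnW (ltn_trans ixK Kn)); rewrite -/Ui in hi.
have hS1 : p * fu m <= S1.
  rewrite /p mulr_natl -sumr_const_nat; apply: ler_sum_nat => i /andP[_ im].
  by apply: mono => //; apply: ltnW.
have hS2 : S2 <= q * fu m.
  rewrite /q mulr_natl -sumr_const_nat; apply: ler_sum_nat => i /andP[mi iK].
  by apply: mono => //; apply: ltn_trans Kn.
have p0 : 0 < p by rewrite /p ltr0n subn_gt0.
have q0 : 0 < q by rewrite /q ltr0n subn_gt0.
have epq : (K - ixx)%:R = p + q by rewrite /p /q -natrD; congr (_%:R); lia.
have e := dl_eq; rewrite epq in e.
have h3 : q * (p * fu m) <= q * S1 by rewrite ler_wpM2l // ltW.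
have h4 : p * S2 <= p * (q * fu m) by rewrite ler_wpM2l // ltW.
have h5 : q * C ixx <= q * Ui by rewrite ler_wpM2l // ltW.
have h6 : p * C n <= p * (Ui + S1 + S2) by rewrite ler_wpM2l // ltW.
have h7 : p * ((p + q) * dl) = p * (C n - C ixx) by rewrite e.
rewrite eU -(ler_pM2l (addr_gt0 p0 q0)).
lra.
Qed.

End Main.

Theorem mainTheorem8 (R : realFieldType) (n K : nat)
  (N : 'rV[R]_n -> R) (x : 'rV[R]_n) :
  (1 < K)%N -> (K < n)%N ->
  is_norm N -> sign_invariant N -> perm_invariant N ->
  feasible K x (ux K x) /\
  (forall u : 'rV[R]_n, feasible K x u -> N (ux K x) <= N u).
Proof.
move=> K1 Kn hN hS hP; split; first exact: ux_feasible.
move=> u [F1 F2 F3 F4].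
pose fu := fun i => nth 0 [seq u ord0 j | j <- enum 'I_n] i.
have fuE : forall i (hi : (i < n)%N), fu i = u ord0 (Ordinal hi).
  move=> i hi; rewrite /fu (nth_map (Ordinal hi)) ?size_enum_ord //.
  by have := nth_ord_enum (Ordinal hi) (Ordinal hi) => /= ->.
have urv : u = @rv R n fu.
  apply/rowP => i; rewrite mxE (fuE _ (ltn_ord i)); congr (u _ _); exact: val_inj.
have fu0 : forall i, (K <= i)%N -> (i < n)%N -> fu i = 0.
  by move=> i h hi; rewrite (fuE _ hi) F3.
have fupos : forall i, (i < n)%N -> 0 <= fu i.
  move=> i hi; case: (ltnP i K) => h; last by rewrite fu0.
  by rewrite (fuE _ hi) F2.
have sf : forall i, (i.+1 < n)%N -> fu i.+1 <= fu i.
  move=> i hi; have hi' : (i < n)%N by apply: ltnW.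
  case: (ltnP i.+1 K) => h; last by rewrite fu0 // fupos.
  by rewrite (fuE _ hi) (fuE _ hi'); apply: F1 => /=.
rewrite urv in F4; move/(wmaj_iff x sf): F4 => wm.
rewrite ux_rv urv.
apply: (fan hN hS hP).
- by move=> i _; apply: fux_mono.
- by move=> i _; apply: fux_ge0.
- exact: sf.
- exact: fupos.
exact: opt_prefix.
Qed.
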